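(* Let $\mathcal{C}$ and $\mathcal{C}'$ be semigroupal categories and let $(F,J)\colon \mathcal{C}\to\mathcal{C}'$ be a semigroupal equivalence. Then for any left (respectively right, respectively two-sided) ideal $\mathcal{I}$ of $\mathcal{C}$, the subcategory $\overline{F(\mathcal{I})}$ is a left (respectively right, respectively two-sided) ideal of $\mathcal{C}'$. Moreover, $F$ restricts to an equivalence of categories between $\mathcal{I}$ and $\overline{F(\mathcal{I})}$.
   Context: A semigroupal category is a category $\mathcal{C}$ with a tensor product functor $\otimes\colon\mathcal{C}\times\mathcal{C}\to\mathcal{C}$ and an associator natural isomorphism $a$ satisfying the pentagon axiom (no unit object is required); throughout, semigroupal categories may be taken strict. A semigroupal functor is a pair $(F,J)$ where $F\colon\mathcal{C}\to\mathcal{C}'$ is a functor and $J\colon F(-)\otimes' F(-)\Rightarrow F(-\otimes -)$ is a natural isomorphism compatible with the associators (hexagon axiom). A semigroupal equivalence is a semigroupal functor $(F,J)$ with $F$ an equivalence of categories (so $F$ is full and $F(\mathcal{I})$ is a subcategory). A subcategory $\mathcal{D}$ of $\mathcal{C}$ is closed under isomorphisms if for every object $X$ of $\mathcal{D}$ and every isomorphism $\varphi\colon X\to X'$ in $\mathcal{C}$, both $X'$ and $\varphi$ lie in $\mathcal{D}$; the isomorphism closure $\overline{\mathcal{D}}$ is the smallest subcategory of $\mathcal{C}$ containing $\mathcal{D}$ and closed under isomorphisms (its objects are those isomorphic to objects of $\mathcal{D}$, and a morphism $\varphi'\colon X'\to Y'$ lies in $\overline{\mathcal{D}}$ iff there are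 objects $X,Y$ of $\mathcal{D}$, isomorphisms $\mu\colon X\to X'$, $\nu\colon Y\to Y'$ in $\mathcal{C}$ and a morphism $\varphi\colon X\to Y$ in $\mathcal{D}$ with $\nu\circ\varphi=\varphi'\circ\mu$). A left (resp. right) ideal of a semigroupal category $\mathcal{C}$ is a subcategory $\mathcal{I}$ closed under isomorphisms such that $Y\otimes X$ (resp. $X\otimes Y$) is an object of $\mathcal{I}$ for all objects $X$ of $\mathcal{I}$ and $Y$ of $\mathcal{C}$; an ideal is a subcategory that is both a left and a right ideal. *)

(* Defs.v *)
From Stdlib Require Import ProofIrrelevance.

Set Implicit Arguments.
Unset Strict Implicit.

Record Category := {
  Ob :> Type;
  Hom : Ob -> Ob -> Type;
  idm : forall X, Hom X X;
  comp : forall X Y Z, Hom Y Z -> Hom X Y -> Hom X Z;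
  comp_id_l : forall X Y (f : Hom X Y), comp (idm Y) f = f;
  comp_id_r : forall X Y (f : Hom X Y), comp f (idm X) = f;
  comp_assoc : forall X Y Z W (f : Hom X Y) (g : Hom Y Z) (h : Hom Z W),
      comp h (comp g f) = comp (comp h g) f
}.
Arguments Hom {c} X Y.
Arguments idm {c} X.
Arguments comp {c X Y Z} g f.

Definition is_iso {C : Category} {X Y : C} (f : Hom X Y) : Prop :=
  exists g : Hom Y X, comp g f = idm X /\ comp f g = idm Y.

Record Functor (C D : Category) := {
  fob :> C -> D;
  fmap : forall X Y : C, Hom X Y -> Hom (fob X) (fob Y);
  fmap_id : forall X, fmap (idm X) = idm (fob X);
  fmap_comp : forall X Y Z (f : Hom X Y) (g : Hom Y Z),
      fmap (comp g f) = comp (fmap g) (fmap f)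
}.
Arguments fmap {C D} _ {X Y} _.

Definition IsEquivalence {C D : Category} (F : Functor C D) : Prop :=
  exists G : Functor D C,
    (exists eta : forall X : C, Hom X (G (F X)),
        (forall X, is_iso (eta X)) /\
        (forall X Y (f : Hom X Y),
            comp (eta Y) f = comp (fmap G (fmap F f)) (eta X))) /\
    (exists eps : forall Y : D, Hom (F (G Y)) Y,
        (forall Y, is_iso (eps Y)) /\
        (forall X Y (g : Hom X Y),
            comp (eps Y) (fmap F (fmap G g)) = comp g (eps X))).

Record SemigroupalCategory := {
  sc_cat :> Category;
  tens : sc_cat -> sc_cat -> sc_cat;
  tensm : forall X X' Y Y' : sc_cat,
      Hom X X' -> Hom Y Y' -> Hom (tens X Y) (tens X' Y');
  tensm_id : forall X Y, tensm (idm X) (idm Y) = idm (tens X Y);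
  tensm_comp : forall X1 X2 X3 Y1 Y2 Y3 (f : Hom X1 X2) (f' : Hom X2 X3)
      (g : Hom Y1 Y2) (g' : Hom Y2 Y3),
      tensm (comp f' f) (comp g' g) = comp (tensm f' g') (tensm f g);
  assoc : forall X Y Z : sc_cat, Hom (tens (tens X Y) Z) (tens X (tens Y Z));
  assoc_iso : forall X Y Z, is_iso (assoc X Y Z);
  assoc_nat : forall X X' Y Y' Z Z' (f : Hom X X') (g : Hom Y Y') (h : Hom Z Z'),
      comp (assoc X' Y' Z') (tensm (tensm f g) h)
      = comp (tensm f (tensm g h)) (assoc X Y Z);
  pentagon : forall X Y Z W : sc_cat,
      comp (assoc X Y (tens Z W)) (assoc (tens X Y) Z W)
      = comp (tensm (idm X) (assoc Y Z W))
          (comp (assoc X (tens Y Z) W) (tensm (assoc X Y Z) (idm W)))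
}.
Arguments tens {s} X Y.
Arguments tensm {s X X' Y Y'} f g.
Arguments assoc {s} X Y Z.

Record SemigroupalFunctor (C C' : SemigroupalCategory) := {
  sf_fun :> Functor C C';
  sf_J : forall X Y : C, Hom (tens (sf_fun X) (sf_fun Y)) (sf_fun (tens X Y));
  sf_J_iso : forall X Y, is_iso (sf_J X Y);
  sf_J_nat : forall X X' Y Y' (f : Hom X X') (g : Hom Y Y'),
      comp (sf_J X' Y') (tensm (fmap sf_fun f) (fmap sf_fun g))
      = comp (fmap sf_fun (tensm f g)) (sf_J X Y);
  sf_hexagon : forall X Y Z : C,
      comp (fmap sf_fun (assoc X Y Z))
           (comp (sf_J (tens X Y) Z) (tensm (sf_J X Y) (idm (sf_fun Z))))
      = comp (sf_J X (tens Y Z))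
           (comp (tensm (idm (sf_fun X)) (sf_J Y Z))
                 (assoc (sf_fun X) (sf_fun Y) (sf_fun Z)))
}.

Definition IsSemigroupalEquivalence {C C'} (F : SemigroupalFunctor C C') : Prop :=
  IsEquivalence F.

Record Subcategory (C : Category) := {
  sob : C -> Prop;
  shom : forall X Y : C, Hom X Y -> Prop;
  shom_ob : forall X Y (f : Hom X Y), shom f -> sob X /\ sob Y;
  shom_id : forall X, sob X -> shom (idm X);
  shom_comp : forall X Y Z (f : Hom X Y) (g : Hom Y Z),
      shom f -> shom g -> shom (comp g f)
}.
Arguments sob {C} s X.
Arguments shom {C} s {X Y} f.

Definition closed_under_isos {C : Category} (D : Subcategory C) : Prop :=
  forall (X X' : C) (phi : Hom X X'), sob D X -> is_iso phi ->
    sob D X' /\ shom D phi.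

Definition IsLeftIdeal {C : SemigroupalCategory} (I : Subcategory C) : Prop :=
  closed_under_isos I /\ forall X Y : C, sob I X -> sob I (tens Y X).

Definition IsRightIdeal {C : SemigroupalCategory} (I : Subcategory C) : Prop :=
  closed_under_isos I /\ forall X Y : C, sob I X -> sob I (tens X Y).

Definition IsIdeal {C : SemigroupalCategory} (I : Subcategory C) : Prop :=
  IsLeftIdeal I /\ IsRightIdeal I.

Inductive IdealKind := LeftK | RightK | TwoSidedK.

Definition is_ideal_of_kind (k : IdealKind) {C : SemigroupalCategory}
  (I : Subcategory C) : Prop :=
  match k with
  | LeftK => IsLeftIdeal I
  | RightK => IsRightIdeal I
  | TwoSidedK => IsIdeal I
  end.

Section SubCat.
Variables (C : Category) (D : Subcategory C).

Definition sc_Ob := { X : C | sob D X }.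
Definition sc_Hom (X Y : sc_Ob) := { f : Hom (proj1_sig X) (proj1_sig Y) | shom D f }.
Definition sc_id (X : sc_Ob) : sc_Hom X X :=
  exist _ (idm (proj1_sig X)) (shom_id (proj2_sig X)).
Definition sc_comp (X Y Z : sc_Ob) (g : sc_Hom Y Z) (f : sc_Hom X Y) : sc_Hom X Z :=
  exist _ (comp (proj1_sig g) (proj1_sig f)) (shom_comp (proj2_sig f) (proj2_sig g)).

Lemma sc_eq (X Y : sc_Ob) (f g : sc_Hom X Y) : proj1_sig f = proj1_sig g -> f = g.
Proof.
  destruct f as [f p], g as [g q]; simpl; intros ->.
  f_equal; apply proof_irrelevance.
Qed.

Definition SubCat : Category.
Proof.
  refine {| Ob := sc_Ob; Hom := sc_Hom; idm := sc_id; comp := sc_comp |};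
  intros; apply sc_eq; simpl.
  - apply comp_id_l.
  - apply comp_id_r.
  - apply comp_assoc.
Defined.
End SubCat.

Definition maps_into {C D : Category} (F : Functor C D)
  (I : Subcategory C) (S : Subcategory D) : Prop :=
  (forall X, sob I X -> sob S (F X)) /\
  (forall X Y (f : Hom X Y), shom I f -> shom S (fmap F f)).

Section Restrict.
Variables (C D : Category) (F : Functor C D) (I : Subcategory C) (S : Subcategory D)
          (H : maps_into F I S).

Definition restr_ob (X : SubCat I) : SubCat S :=
  exist _ (F (proj1_sig X)) (proj1 H _ (proj2_sig X)).
Definition restr_map (X Y : SubCat I) (f : Hom X Y) : Hom (restr_ob X) (restr_ob Y) :=
  exist _ (fmap F (proj1_sig f)) (proj2 H _ _ _ (proj2_sig f)).

Definition restrict : Functor (SubCat I) (SubCat S).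
Proof.
  refine {| fob := restr_ob; fmap := restr_map |}; intros; apply sc_eq; simpl.
  - apply fmap_id.
  - apply fmap_comp.
Defined.
End Restrict.

(* The isomorphism closure of the image F(I) of a subcategory I, written out
   explicitly (objects isomorphic to some F X with X in I; morphisms phi'
   for which there are isos mu : F X -> X', nu : F Y -> Y' and f : X -> Y in I
   with nu o F f = phi' o mu). *)
Definition closure_image_ob {C D : Category} (F : Functor C D)
  (I : Subcategory C) (X' : D) : Prop :=
  exists (X : C) (mu : Hom (F X) X'), sob I X /\ is_iso mu.

Definition closure_image_hom {C D : Category} (F : Functor C D)
  (I : Subcategory C) (X' Y' : D) (phi' : Hom X' Y') : Prop :=
  exists (X Y : C) (mu : Hom (F X) X') (nu : Hom (F Y) Y') (f : Hom X Y),
    sob I X /\ sob I Y /\ is_iso mu /\ is_iso nu /\ shom I f /\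
    comp nu (fmap F f) = comp phi' mu.

(* Main.v *)
Require Import Defs.

Section CatLemmas.
Context {C : Category}.

Lemma iso_id (X : C) : is_iso (idm X).
Proof. exists (idm X); split; apply comp_id_l. Qed.

Lemma iso_comp {X Y Z : C} (f : Hom X Y) (g : Hom Y Z) :
  is_iso f -> is_iso g -> is_iso (comp g f).
Proof.
  intros [f' [Hf1 Hf2]] [g' [Hg1 Hg2]]. exists (comp f' g'). split.
  - rewrite <- comp_assoc. rewrite (comp_assoc f g g'), Hg1, comp_id_l. exact Hf1.
  - rewrite <- comp_assoc. rewrite (comp_assoc g' f' f), Hf2, comp_id_l. exact Hg2.
Qed.

Lemma epi_iso {X Y Z : C} (e : Hom X Y) (g g' : Hom Y Z) :
  is_iso e -> comp g e = comp g' e -> g = g'.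
Proof.
  intros [e' [H1 H2]] H.
  rewrite <- (comp_id_r g), <- (comp_id_r g'), <- H2, !comp_assoc, H. reflexivity.
Qed.

Lemma whisk {X Y Y' Z : C} (a : Hom Y Z) (b : Hom X Y) (c : Hom Y' Z) (d : Hom X Y') :
  comp a b = comp c d -> forall V (e : Hom V X), comp a (comp b e) = comp c (comp d e).
Proof. intros H V e. rewrite !comp_assoc, H. reflexivity. Qed.
End CatLemmas.

Lemma fmap_iso {C D : Category} (F : Functor C D) {X Y : C} (f : Hom X Y) :
  is_iso f -> is_iso (fmap F f).
Proof.
  intros [g [H1 H2]]. exists (fmap F g). split; rewrite <- fmap_comp.
  - rewrite H1; apply fmap_id.
  - rewrite H2; apply fmap_id.
Qed.

Lemma tensm_iso {C : SemigroupalCategory} {X X' Y Y' : C} (f : Hom X X') (g : Hom Y Y') :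
  is_iso f -> is_iso g -> is_iso (tensm f g).
Proof.
  intros [f' [H1 H2]] [g' [H3 H4]]. exists (tensm f' g'). split; rewrite <- tensm_comp.
  - rewrite H1, H3; apply tensm_id.
  - rewrite H2, H4; apply tensm_id.
Qed.

Lemma sub_iso {C : Category} (D : Subcategory C) (HD : closed_under_isos D)
  (X Y : SubCat D) (f : Hom X Y) : is_iso (proj1_sig f) -> is_iso f.
Proof.
  destruct X as [x hx], Y as [y hy], f as [f hf]; simpl.
  intros [g [H1 H2]].
  assert (Hg : is_iso g) by (exists f; split; assumption).
  exists (exist _ g (proj2 (HD y x g hy Hg)) : @Hom (SubCat D) (exist _ y hy) (exist _ x hx)).
  split; apply sc_eq; simpl; assumption.
Qed.

Lemma ideal_closed k {C : SemigroupalCategory} (I : Subcategory C) :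
  is_ideal_of_kind k I -> closed_under_isos I.
Proof. destruct k; simpl; unfold IsIdeal, IsLeftIdeal, IsRightIdeal; tauto. Qed.

Section Main.
Variables (C C' : SemigroupalCategory) (F : SemigroupalFunctor C C') (G : Functor C' C)
  (eta : forall X : C, Hom X (G (F X)))
  (Heta_iso : forall X, is_iso (eta X))
  (Heta_nat : forall X Y (f : Hom X Y),
            comp (eta Y) f = comp (fmap G (fmap F f)) (eta X))
  (eps : forall Y : C', Hom (F (G Y)) Y)
  (Heps_iso : forall Y, is_iso (eps Y))
  (Heps_nat : forall X Y (g : Hom X Y),
            comp (eps Y) (fmap F (fmap G g)) = comp g (eps X))
  (I : Subcategory C) (HIc : closed_under_isos I).

Lemma G_faithful X Y (g g' : Hom X Y) : fmap G g = fmap G g' -> g = g'.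
Proof.
  intro H. eapply epi_iso; [apply (Heps_iso X)|]. rewrite <- !Heps_nat, H. reflexivity.
Qed.

Lemma F_full X Y (u : Hom (F X) (F Y)) :
  exists h, fmap F h = u /\ (is_iso u -> is_iso h).
Proof.
  destruct (Heta_iso Y) as [ei [Hei1 Hei2]].
  exists (comp ei (comp (fmap G u) (eta X))). split.
  - apply G_faithful. eapply epi_iso; [apply (Heta_iso X)|]. rewrite <- Heta_nat.
    rewrite comp_assoc, Hei2, comp_id_l. reflexivity.
  - intro Hu. apply iso_comp.
    + apply iso_comp; [apply Heta_iso | apply fmap_iso; exact Hu].
    + exists (eta Y); split; assumption.
Qed.

Lemma S_shom_ob (X Y : C') (f : Hom X Y) :
  closure_image_hom F I f -> closure_image_ob F I X /\ closure_image_ob F I Y.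
Proof.
  intros [X0 [Y0 [mu [nu [f0 [HX [HY [Hmu [Hnu _]]]]]]]]].
  split; [exists X0, mu | exists Y0, nu]; split; assumption.
Qed.

Lemma S_shom_id (X : C') : closure_image_ob F I X -> closure_image_hom F I (idm X).
Proof.
  intros [X0 [mu [HX Hmu]]]. exists X0, X0, mu, mu, (idm X0).
  repeat split; try assumption. apply shom_id; assumption.
  rewrite fmap_id, comp_id_r, comp_id_l. reflexivity.
Qed.

Lemma S_shom_comp (X Y Z : C') (f : Hom X Y) (g : Hom Y Z) :
  closure_image_hom F I f -> closure_image_hom F I g -> closure_image_hom F I (comp g f).
Proof.
  intros [X0 [Y0 [mu [nu [f0 [HX [HY [Hmu [Hnu [Hf E1]]]]]]]]]]
         [Y2 [Z0 [mu2 [nu2 [g0 [HY2 [HZ [Hmu2 [Hnu2 [Hg E2]]]]]]]]]].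
  destruct Hmu2 as [m2i [Hm1 Hm2]].
  assert (Hm2i : is_iso m2i) by (exists mu2; split; assumption).
  destruct (F_full _ _ (comp m2i nu)) as [h [Hh Hhi]].
  assert (Hhiso : is_iso h) by (apply Hhi; apply iso_comp; assumption).
  assert (HhI : shom I h) by exact (proj2 (HIc _ _ h HY Hhiso)).
  exists X0, Z0, mu, nu2, (comp g0 (comp h f0)).
  repeat split; try assumption.
  - apply shom_comp; [apply shom_comp|]; assumption.
  - rewrite !fmap_comp, Hh. rewrite <- !comp_assoc.
    rewrite (whisk _ _ _ _ E2). rewrite (comp_assoc (comp nu (fmap F f0)) m2i mu2), Hm2, comp_id_l, E1.
    reflexivity.
Qed.

Definition S : Subcategory C' :=
  {| sob := closure_image_ob F I;
     shom := fun X Y f => closure_image_hom F I f;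
     shom_ob := S_shom_ob;
     shom_id := S_shom_id;
     shom_comp := S_shom_comp |}.

Lemma S_closed : closed_under_isos S.
Proof.
  intros X' X'' phi [X [mu [HX Hmu]]] Hphi. split.
  - exists X, (comp phi mu). split; [assumption | apply iso_comp; assumption].
  - exists X, X, mu, (comp phi mu), (idm X).
    repeat split; try assumption.
    + apply iso_comp; assumption.
    + apply shom_id; assumption.
    + rewrite fmap_id, comp_id_r. reflexivity.
Qed.

Lemma S_left : (forall X Y : C, sob I X -> sob I (tens Y X)) ->
  forall X Y : C', sob S X -> sob S (tens Y X).
Proof.
  intros HL X' Y' [X [mu [HX Hmu]]].
  destruct (sf_J_iso F (G Y') X) as [Ji [H1 H2]].
  exists (tens (G Y') X), (comp (tensm (eps Y') mu) Ji). split.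
  - apply HL; assumption.
  - apply iso_comp; [exists (sf_J F (G Y') X); split; assumption|].
    apply tensm_iso; auto.
Qed.

Lemma S_right : (forall X Y : C, sob I X -> sob I (tens X Y)) ->
  forall X Y : C', sob S X -> sob S (tens X Y).
Proof.
  intros HL X' Y' [X [mu [HX Hmu]]].
  destruct (sf_J_iso F X (G Y')) as [Ji [H1 H2]].
  exists (tens X (G Y')), (comp (tensm mu (eps Y')) Ji). split.
  - apply HL; assumption.
  - apply iso_comp; [exists (sf_J F X (G Y')); split; assumption|].
    apply tensm_iso; auto.
Qed.

Lemma HM : maps_into F I S.
Proof.
  split.
  - intros X HX. exists X, (idm (F X)). split; [assumption | apply iso_id].
  - intros X Y f Hf. destruct (shom_ob Hf) as [HX HY].
    exists X, Y, (idm _), (idm _), f. repeat split; try assumption; try apply iso_id.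
    simpl. rewrite comp_id_l, comp_id_r. reflexivity.
Qed.

Lemma G_in_I (Y : C') : sob S Y -> sob I (G Y).
Proof.
  intros [X [mu [HX Hmu]]].
  pose proof (proj1 (HIc _ _ (eta X) HX (Heta_iso X))) as H1.
  exact (proj1 (HIc _ _ (fmap G mu) H1 (fmap_iso G _ Hmu))).
Qed.

Lemma GF_in_I X Y (f : Hom X Y) : shom I f -> shom I (fmap G (fmap F f)).
Proof.
  intro Hf. destruct (shom_ob Hf) as [HX HY].
  destruct (Heta_iso X) as [ei [H1 H2]].
  assert (E : fmap G (fmap F f) = comp (eta Y) (comp f ei)).
  { rewrite <- (comp_id_r (fmap G (fmap F f))), <- H2, comp_assoc, <- Heta_nat,
      comp_assoc. reflexivity. }
  rewrite E. apply shom_comp; [apply shom_comp|].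
  - assert (is_iso ei) by (exists (eta X); split; assumption).
    exact (proj2 (HIc _ _ ei (proj1 (HIc _ _ (eta X) HX (Heta_iso X))) H)).
  - exact Hf.
  - exact (proj2 (HIc _ _ (eta Y) HY (Heta_iso Y))).
Qed.

Lemma Gmap_in_I X' Y' (phi : Hom X' Y') : shom S phi -> shom I (fmap G phi).
Proof.
  intros [X [Y [mu [nu [f [HX [HY [Hmu [Hnu [Hf E]]]]]]]]]].
  assert (HX' : sob S X') by (exists X, mu; split; assumption).
  pose proof (G_in_I _ HX') as HGX'.
  destruct Hmu as [mi [Hmi1 Hmi2]].
  assert (Hmii : is_iso mi) by (exists mu; split; assumption).
  assert (E2 : phi = comp nu (comp (fmap F f) mi)).
  { rewrite comp_assoc, E, <- comp_assoc, Hmi2, comp_id_r. reflexivity. }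
  rewrite E2, !fmap_comp. apply shom_comp; [apply shom_comp|].
  - exact (proj2 (HIc _ _ (fmap G mi) HGX' (fmap_iso G _ Hmii))).
  - apply GF_in_I; assumption.
  - pose proof (proj1 (HIc _ _ (eta Y) HY (Heta_iso Y))) as HGFY.
    exact (proj2 (HIc _ _ (fmap G nu) HGFY (fmap_iso G _ Hnu))).
Qed.

Definition G'ob (Y : SubCat S) : SubCat I :=
  exist _ (G (proj1_sig Y)) (G_in_I _ (proj2_sig Y)).
Definition G'map (X Y : SubCat S) (f : Hom X Y) : Hom (G'ob X) (G'ob Y) :=
  exist _ (fmap G (proj1_sig f)) (Gmap_in_I _ _ _ (proj2_sig f)).

Definition G' : Functor (SubCat S) (SubCat I).
Proof.
  refine {| fob := G'ob; fmap := G'map |}; intros; apply sc_eq; simpl.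
  - apply fmap_id.
  - apply fmap_comp.
Defined.

Lemma HSd (Y : C') : sob S Y -> sob S (F (G Y)).
Proof. intro H. exists (G Y), (idm _). split; [apply G_in_I; exact H | apply iso_id]. Qed.

Lemma restr_equiv : IsEquivalence (restrict HM).
Proof.
  exists G'. split.
  - exists (fun X : SubCat I =>
       (exist _ (eta (proj1_sig X)) (proj2 (HIc _ _ _ (proj2_sig X) (Heta_iso _)))
        : Hom X (G' (restrict HM X)))).
    split.
    + intro X. apply sub_iso; [exact HIc | apply Heta_iso].
    + intros X Y f. apply sc_eq. simpl. apply Heta_nat.
  - exists (fun Y : SubCat S =>
       (exist _ (eps (proj1_sig Y))
          (proj2 (S_closed _ _ _ (HSd _ (proj2_sig Y)) (Heps_iso _)))
        : Hom (restrict HM (G' Y)) Y)).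
    split.
    + intro Y. apply sub_iso; [exact S_closed | apply Heps_iso].
    + intros X Y g. apply sc_eq. simpl. apply Heps_nat.
Qed.
End Main.

Theorem lemma2p10 (C C' : SemigroupalCategory) (F : SemigroupalFunctor C C')
  (HF : IsSemigroupalEquivalence F) (k : IdealKind) (I : Subcategory C)
  (HI : is_ideal_of_kind k I) :
  exists S : Subcategory C',
    (forall X', sob S X' <-> closure_image_ob F I X') /\
    (forall X' Y' (phi' : Hom X' Y'), shom S phi' <-> closure_image_hom F I phi') /\
    is_ideal_of_kind k S /\
    exists H : maps_into F I S, IsEquivalence (restrict H).
Proof.
  destruct HF as [G [[eta [Hei Hen]] [eps [Hpi Hpn]]]].
  pose proof (ideal_closed _ _ HI) as HIc.
  exists (S C C' F G eta Hei Hen eps Hpi Hpn I HIc).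
  split; [intro; simpl; tauto|]. split; [intros; simpl; tauto|].
  pose proof (S_closed C C' F G eta Hei Hen eps Hpi Hpn I HIc) as Hc.
  pose proof (S_left C C' F G eta Hei Hen eps Hpi Hpn I HIc) as Hl.
  pose proof (S_right C C' F G eta Hei Hen eps Hpi Hpn I HIc) as Hr.
  split.
  - destruct k; simpl in *; unfold IsIdeal, IsLeftIdeal, IsRightIdeal in *; tauto.
  - exists (HM C C' F G eta Hei Hen eps Hpi Hpn I HIc).
    apply restr_equiv.
Qed.
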